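(* Let $m\ge2$ and $0<\alpha<1$. An arithmetic box space $\square_{(G_m(N_k))_k}G_m$ has property $D_\alpha$ if and only if there is a constant $c>0$ such that $\operatorname{ord}_m(N_k)\ge c\,N_k^{\alpha/(1-\alpha)}$ for all $k$.
   Context: $G_m$ is the subgroup of $GL_2(\mathbb Z[1/m])$ of matrices $\begin{pmatrix} m^k & r\\ 0&1\end{pmatrix}$, $k\in\mathbb Z$, $r\in\mathbb Z[1/m]$, generated by $A=\begin{pmatrix}1&1\\0&1\end{pmatrix}$, $T=\begin{pmatrix}m&0\\0&1\end{pmatrix}$. For $N$ coprime to $m$, $G_m(N)$ is the kernel of reduction modulo $N$, $G_m\to GL_2(\mathbb Z/N\mathbb Z)$, and $\operatorname{ord}_m(N)$ is the multiplicative order of $m$ modulo $N$. An arithmetic box space of $G_m$ is the family of Cayley graphs $\mathrm{Cay}(G_m/G_m(N_k),\{A,T\})$ where $(N_k)$ is a strictly increasing sequence of integers $\ge2$ coprime to $m$ with $N_k\mid N_{k+1}$. It has property $D_\alpha$ if there is $C>0$ with $\operatorname{diam}\mathrm{Cay}(G_m/G_m(N_k),\{A,T\})\ge C|G_m/G_m(N_k)|^\alpha$ for all $k$. *)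

(* Defs.v *)
From HB Require Import structures.
From mathcomp Require Import all_boot all_order all_algebra all_fingroup.
Set Implicit Arguments.
Unset Strict Implicit.
Unset Printing Implicit Defensive.
Import GRing.Theory.

Section Cayley.
Variable gT : finGroupType.
Local Open Scope group_scope.

Definition symgen (S : {set gT}) : {set gT} := S :|: [set s^-1 | s in S].

Definition cball (S : {set gT}) (n : nat) : {set gT} :=
  iter n (fun B => B :|: B * symgen S) [set 1].

(* word length of g (distance from 1 in Cay(<S>, S)); only meaningful for
   g \in <<S>>, for which it is found below #|gT| *)
Definition wordlen (S : {set gT}) (g : gT) : nat :=
  find (fun n => g \in cball S n) (iota 0 #|gT|).

Definition cdist (S : {set gT}) (g h : gT) : nat := wordlen S (g^-1 * h).

Definition cay_diam (S : {set gT}) : nat :=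
  \max_(g in <<S>>) \max_(h in <<S>>) cdist S g h.
End Cayley.

(* G_m / G_m(N) is (first isomorphism theorem) the image of G_m under
   reduction mod N in GL_2(Z/NZ); since G_m = <A, T>, this image is the
   subgroup of GL_2(Z/NZ) generated by the reductions of A and T, and the
   Cayley graph w.r.t. {A, T} is the one w.r.t. their reductions. *)

Definition matA (N : nat) : 'M['Z_N]_2 :=
  \matrix_(i < 2, j < 2) (if (i == 0 :> nat) then 1 else if (j == 1 :> nat) then 1 else 0)%R.
(* A = [[1,1],[0,1]] :  (0,0)->1, (0,1)->1, (1,0)->0, (1,1)->1 *)

Definition matT (m N : nat) : 'M['Z_N]_2 :=
  \matrix_(i < 2, j < 2)
    (if (i == 0 :> nat) && (j == 0 :> nat) then m%:R
     else if (i == 1 :> nat) && (j == 1 :> nat) then 1 else 0)%R.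
(* T = [[m,0],[0,1]] *)

(* elements of GL_2(Z/N); insubd falls back to 1 for a non-invertible matrix,
   which never happens here since det A = 1 and det T = m is a unit mod N
   when m and N are coprime *)
Definition glA (N : nat) : {'GL_2['Z_N]} := insubd (1%g : {'GL_2['Z_N]}) (matA N).
Definition glT (m N : nat) : {'GL_2['Z_N]} := insubd (1%g : {'GL_2['Z_N]}) (matT m N).

Definition genAT (m N : nat) : {set {'GL_2['Z_N]}} := [set glA N; glT m N].

Definition quot (m N : nat) : {set {'GL_2['Z_N]}} := <<genAT m N>>%g.

Definition quot_card (m N : nat) : nat := #|quot m N|.

Definition quot_diam (m N : nat) : nat := cay_diam (genAT m N).

Definition ordm (m N : nat) : nat :=
  #[(insubd (1%g : {unit 'Z_N}) (m%:R : 'Z_N)%R)]%g.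

From Stdlib Require Import Reals.

Definition arith_seq (m : nat) (N : nat -> nat) : Prop :=
  forall k, (2 <= N k)%N /\ coprime (N k) m /\ (N k < N k.+1)%N /\ (N k %| N k.+1)%N.

Definition D_alpha (m : nat) (N : nat -> nat) (alpha : R) : Prop :=
  exists C : R, (0 < C)%R /\
    forall k, (INR (quot_diam m (N k)) >= C * Rpower (INR (quot_card m (N k))) alpha)%R.

(* Main.v *)
Require Import Defs.
From Stdlib Require Import Reals Lra Lia Psatz.

Module RealM.
Local Open Scope R_scope.

Lemma le_of_ln a b : 0 < a -> 0 < b -> ln a <= ln b -> a <= b.
Proof.
intros ha hb h. rewrite <- (exp_ln a ha), <- (exp_ln b hb).
destruct h as [h|h]. - left; apply exp_increasing; exact h. - rewrite h; lra.
Qed.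

Lemma ln_le_mono a b : 0 < a -> a <= b -> ln a <= ln b.
Proof.
intros ha [h|h]. - left; apply ln_increasing; lra. - subst; lra.
Qed.

Lemma Rpower_pos x y : 0 < Rpower x y.
Proof. unfold Rpower; apply exp_pos. Qed.

Lemma ln_Rpower_mul c x y : 0 < c -> ln (c * Rpower x y) = ln c + y * ln x.
Proof.
intros hc. rewrite ln_mult; [| exact hc | apply Rpower_pos]. now rewrite ln_Rpower.
Qed.

Lemma fwd_real (a c o n d Q : R) : 0 < a < 1 -> 0 < c -> 1 <= o -> 2 <= n -> Q = n * o ->
  o <= 4 * d -> c * Rpower n (a / (1 - a)) <= o ->
  exp ((1 - a) * ln c - ln 4) * Rpower Q a <= d.
Proof.
intros ha hc ho hn hQ hd h.
apply Rle_trans with (o / 4); [| lra].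
apply le_of_ln; [ apply Rmult_lt_0_compat; [apply exp_pos | apply Rpower_pos] | lra |].
rewrite ln_Rpower_mul, ln_exp by apply exp_pos.
unfold Rdiv; rewrite ln_mult, ln_Rinv by lra.
rewrite hQ, ln_mult by lra.
apply ln_le_mono in h; [| apply Rmult_lt_0_compat; [exact hc | apply Rpower_pos]].
rewrite ln_Rpower_mul in h by exact hc.
assert (h1 : (1 - a) * (ln c + a / (1 - a) * ln n) <= (1 - a) * ln o).
{ apply Rmult_le_compat_l; lra. }
replace ((1 - a) * (ln c + a / (1 - a) * ln n)) with ((1 - a) * ln c + a * ln n) in h1
  by (field; lra).
lra.
Qed.

Lemma ln_le_x y : 0 < y -> ln y <= y - 1.
Proof.
intros hy. pose proof (exp_ineq1_le (ln y)) as h. rewrite exp_ln in h by exact hy. lra.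
Qed.

Lemma bwd_real a C m : 0 < a < 1 -> 0 < C -> 0 < m ->
  exists c, 0 < c /\ forall o n d t, 1 <= o -> 2 <= n -> 0 <= t -> t * ln 2 <= ln n ->
    C * Rpower (n * o) a <= d -> d <= o + m * (t + 1) ->
    c * Rpower n (a / (1 - a)) <= o.
Proof.
intros ha hC hm.
set (c1 := exp ((ln C - ln 2) / (1 - a))).
set (K := 2 * m * (1 + 4 / a)).
assert (hK : 0 < K) by (unfold K; apply Rmult_lt_0_compat; [lra | ]; 
  assert (0 < 4 / a) by (apply Rdiv_lt_0_compat; lra); lra).
set (c2 := exp (- (2 / (1 - a)) * ln (K / C))).
exists (Rmin c1 c2). split.
{ apply Rmin_glb_lt; apply exp_pos. }
intros o n d t ho hn ht htn h1 h2.
assert (hnp : 0 < n) by lra.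
assert (hln2 := ln_lt_2).
assert (hlnn : 0 < ln n) by (rewrite <- ln_1; apply ln_increasing; lra).
assert (hlno : 0 <= ln o) by (rewrite <- ln_1; apply ln_le_mono; lra).
destruct (Rle_or_lt (m * (t + 1)) o) as [hL | hL].
- apply Rle_trans with (c1 * Rpower n (a / (1 - a))).
  { apply Rmult_le_compat_r; [left; apply Rpower_pos | apply Rmin_l]. }
  apply le_of_ln; [ apply Rmult_lt_0_compat; [apply exp_pos | apply Rpower_pos] | lra |].
  unfold c1; rewrite ln_Rpower_mul, ln_exp by apply exp_pos.
  assert (h3 : C * Rpower (n * o) a <= 2 * o) by lra.
  apply ln_le_mono in h3; [| apply Rmult_lt_0_compat; [exact hC | apply Rpower_pos]].
  rewrite ln_Rpower_mul, ln_mult, ln_mult in h3 by lra.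
  replace ((ln C - ln 2) / (1 - a) + a / (1 - a) * ln n)
    with ((ln C - ln 2 + a * ln n) * / (1 - a)) by (field; lra).
  replace (ln o) with (((1 - a) * ln o) * / (1 - a)) by (field; lra).
  apply Rmult_le_compat_r; [left; apply Rinv_0_lt_compat; lra | lra].
- apply Rle_trans with (c2 * Rpower n (a / (1 - a))).
  { apply Rmult_le_compat_r; [left; apply Rpower_pos | apply Rmin_r]. }
  set (Y := Rpower n (a / 2)).
  assert (hY : 0 < Y) by apply Rpower_pos.
  assert (hlnY : ln Y = a / 2 * ln n) by (unfold Y; apply ln_Rpower).
  assert (hY1 : 1 <= Y).
  { apply le_of_ln; [lra | exact hY |]. rewrite ln_1, hlnY.
    assert (0 < a / 2 * ln n) by (apply Rmult_lt_0_compat; lra). lra. }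
  assert (hnY : Rpower n a = Y * Y).
  { unfold Y; rewrite <- Rpower_plus; f_equal; field. }
  assert (hpow : Rpower n a <= Rpower (n * o) a).
  { apply Rle_Rpower_l; [lra | split; [exact hnp | nra]]. }
  assert (ht2 : t <= 2 * ln n).
  { assert (t * (1/2) <= t * ln 2) by (apply Rmult_le_compat_l; lra). lra. }
  assert (hlnY2 : ln n <= 2 / a * Y).
  { pose proof (ln_le_x Y hY) as h.
    replace (ln n) with (2 / a * ln Y) by (rewrite hlnY; field; lra).
    assert (0 < 2 / a) by (apply Rdiv_lt_0_compat; lra).
    apply Rmult_le_compat_l; lra. }
  assert (hCY : C * (Y * Y) <= K * Y).
  { rewrite <- hnY. apply Rle_trans with (2 * (m * (t + 1))).
    - assert (C * Rpower n a <= C * Rpower (n * o) a) by (apply Rmult_le_compat_l; lra). lra.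
    - unfold K.
      assert (h4 : t + 1 <= (1 + 4 / a) * Y).
      { assert (h5 : 4 / a * Y = 2 * (2 / a * Y)) by (field; lra).
        assert (0 < 4 / a) by (apply Rdiv_lt_0_compat; lra).
        nra. }
      nra. }
  assert (hYK : Y <= K / C).
  { apply Rmult_le_reg_l with C; [exact hC |].
    replace (C * (K / C)) with K by (field; lra).
    apply Rmult_le_reg_r with Y; [exact hY | nra]. }
  apply le_of_ln; [ apply Rmult_lt_0_compat; [apply exp_pos | apply Rpower_pos] | lra |].
  unfold c2; rewrite ln_Rpower_mul, ln_exp by apply exp_pos.
  assert (hlnYK : ln Y <= ln (K / C)) by (apply ln_le_mono; lra).
  replace (a / (1 - a) * ln n) with (2 / (1 - a) * ln Y) by (rewrite hlnY; field; lra).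
  assert (0 < 2 / (1 - a)) by (apply Rdiv_lt_0_compat; lra).
  assert (2 / (1 - a) * ln Y <= 2 / (1 - a) * ln (K / C)) by (apply Rmult_le_compat_l; lra).
  lra.
Qed.

End RealM.
Import RealM.

From HB Require Import structures.
From mathcomp Require Import all_boot all_order all_algebra all_fingroup.
From mathcomp Require Import cyclic zify ring.

Module CayleyM.
Set Implicit Arguments. Unset Strict Implicit. Unset Printing Implicit Defensive.

Section CB.
Variables (gT : finGroupType) (S : {set gT}).
Local Open Scope group_scope.

Lemma cballS n : cball S n.+1 = cball S n :|: cball S n * symgen S.
Proof. by []. Qed.

Lemma cball0 : cball S 0 = [set 1].
Proof. by []. Qed.

Lemma cball_mono n k : cball S n \subset cball S (n + k).
Proof.
elim: k => [|k IH]; first by rewrite addn0.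
by apply: (subset_trans IH); rewrite addnS cballS subsetUl.
Qed.

Lemma cball_monoW n n' : (n <= n')%N -> cball S n \subset cball S n'.
Proof. by move/subnKC <-; exact: cball_mono. Qed.

Lemma cball_lmul s g n : s \in symgen S -> g \in cball S n -> s * g \in cball S n.+1.
Proof.
move=> hs; elim: n g => [|n IH] g.
  rewrite cball0 => /set1P ->; rewrite mulg1 cballS; apply/setUP; right.
  by rewrite -[s]mul1g; apply: mem_mulg; rewrite ?cball0 ?set11.
rewrite cballS => /setUP[hg|].
  by have := subsetP (cball_mono n.+1 1); rewrite addn1; apply; apply: IH.
case/mulsgP => b t hb ht ->; rewrite mulgA.
by rewrite cballS; apply/setUP; right; apply: mem_mulg => //; apply: IH.
Qed.

Lemma cball_lpow s g n d : s \in symgen S -> g \in cball S n -> s ^+ d * g \in cball S (n + d).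
Proof.
move=> hs hg; elim: d => [|d IH]; first by rewrite expg0 mul1g addn0.
by rewrite expgS -mulgA addnS; apply: cball_lmul.
Qed.

Lemma wordlen_le g n : g \in cball S n -> (wordlen S g <= n)%N.
Proof.
move=> hg; rewrite /wordlen.
case: (ltnP n #|gT|) => hn; last first.
  by apply: leq_trans hn; rewrite -{2}(size_iota 0 #|gT|); apply: find_size.
rewrite leqNgt; apply/negP => /(before_find 0).
by rewrite nth_iota // add0n hg.
Qed.

Lemma wordlen_ge g j : (forall i, (i < j)%N -> g \notin cball S i) -> (j <= #|gT|)%N ->
  (j <= wordlen S g)%N.
Proof.
move=> hj hjT; rewrite /wordlen.
set f := find _ _.
case: (ltnP f (size (iota 0 #|gT|))) => hf; last by rewrite size_iota in hf; exact: leq_trans hf.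
have := nth_find 0 (a := fun n => g \in cball S n) (s := iota 0 #|gT|).
rewrite has_find => /(_ hf); rewrite size_iota in hf; rewrite nth_iota // add0n -/f => hgf.
by rewrite leqNgt; apply/negP => /hj; rewrite hgf.
Qed.

Lemma diam_le B : (forall g, g \in <<S>> -> (wordlen S g <= B)%N) -> (cay_diam S <= B)%N.
Proof.
move=> h; apply/bigmax_leqP => g hg; apply/bigmax_leqP => k hk.
by apply: h; rewrite groupM ?groupV.
Qed.

Lemma diam_ge g : g \in <<S>> -> (wordlen S g <= cay_diam S)%N.
Proof.
move=> hg; rewrite /cay_diam.
apply: leq_trans (leq_bigmax_cond _ (group1 <<S>>)).
apply: leq_trans (leq_bigmax_cond _ hg).
by rewrite /cdist invg1 mul1g.
Qed.

End CB.

End CayleyM.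
Import CayleyM.

Module QuotM.
Set Implicit Arguments. Unset Strict Implicit. Unset Printing Implicit Defensive.
Import GRing.Theory FinRing.Theory.
Local Open Scope ring_scope.

Section Quot.
Variables (m N : nat).
Hypothesis HN : (1 < N)%N.
Hypothesis Hc : coprime N m.

Local Notation Z := 'Z_N.
Local Notation gT := {'GL_2['Z_N]}.
Local Notation GG := (matrix_GLtype__canonical__fingroup_FinGroup 2 'Z_N).

Lemma mul22 (M P : 'M[Z]_2) i j :
  (M *m P) i j = (M i 0 * P 0 j + M i 1 * P 1 j)%R.
Proof.
rewrite mxE !big_ord_recr big_ord0 /= add0r.
by congr (M i _ * P _ j + M i _ * P _ j); apply: val_inj.
Qed.

Lemma unit_m : (m%:R : Z) \is a GRing.unit.
Proof. by rewrite unitZpE // coprime_sym. Qed.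

Lemma det_up (M : 'M[Z]_2) : M 1 0 = 0%R -> \det M = (M 0 0 * M 1 1)%R.
Proof.
move=> h; rewrite -det_tr det_trig.
  rewrite !big_ord_recr big_ord0 /= mul1r !mxE.
  by congr (M _ _ * M _ _); apply: val_inj.
apply/forallP => i; apply/forallP => j; apply/implyP; case: i => [[|[|i]] ?] //; case: j => [[|[|j]] ?] //= _; rewrite mxE; apply/eqP; rewrite -h; by congr (M _ _); apply: val_inj; rewrite /= ?modn_small.
Qed.

Lemma matA_unit : matA N \in unitmx.
Proof.
rewrite unitmxE det_up ?mxE //= mulr1 unitr1 //.
Qed.

Lemma matT_unit : matT m N \in unitmx.
Proof. by rewrite unitmxE det_up ?mxE //= mulr1 unit_m. Qed.

Lemma glA_E : GLval (glA N) = matA N.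
Proof. rewrite /glA; apply: (insubdK (1%g : gT)). exact: matA_unit. Qed.

Lemma glT_E : GLval (glT m N) = matT m N.
Proof. rewrite /glT; apply: (insubdK (1%g : gT)). exact: matT_unit. Qed.


Definition ent (g : gT) (i j : 'I_2) : Z := GLval g i j.

Lemma entM g h i j : ent (g * h)%g i j = ent g i 0 * ent h 0 j + ent g i 1 * ent h 1 j.
Proof. by rewrite /ent GL_MxE mul22. Qed.

Lemma ent1 i j : ent 1%g i j = (i == j)%:R.
Proof. by rewrite /ent GL_1E mxE. Qed.

Definition shp (g : gT) (a b : Z) :=
  [/\ ent g 0 0 = a, ent g 0 1 = b, ent g 1 0 = 0 & ent g 1 1 = 1].

Lemma shp_mul g h a b c d : shp g a b -> shp h c d -> shp (g * h)%g (a * c) (a * d + b).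
Proof.
case=> g00 g01 g10 g11 [h00 h01 h10 h11]; split; rewrite entM.
- by rewrite g00 h00 g01 h10 mulr0 addr0.
- by rewrite g00 h01 g01 h11 mulr1.
- by rewrite g10 h00 g11 h10 mul0r mulr0 addr0.
- by rewrite g10 h01 g11 h11 mul0r mulr1 add0r.
Qed.

Lemma ord2P (i : 'I_2) : i = 0 \/ i = 1.
Proof. case: i => [[|[|i]] Hi] //; [left|right]; exact: val_inj. Qed.

Lemma shp_inj g h a b : shp g a b -> shp h a b -> g = h.
Proof.
case=> g00 g01 g10 g11 [h00 h01 h10 h11]; apply: val_inj; apply/matrixP => i j.
rewrite /ent in g00 g01 g10 g11 h00 h01 h10 h11.
by case: (ord2P i) => ->; case: (ord2P j) => -> /=; rewrite ?g00 ?g01 ?g10 ?g11 ?h00 ?h01 ?h10 ?h11.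
Qed.

Lemma shp_inv g a b : a \is a GRing.unit -> shp g a b -> shp (g^-1)%g a^-1 (- (a^-1 * b)).
Proof.
move=> ua sg; have := sg; case=> g00 g01 g10 g11.
have e : forall i j, ent (g^-1 * g)%g i j = (i == j)%:R by move=> i j; rewrite mulVg ent1.
have e00 := e 0 0; have e01 := e 0 1; have e10 := e 1 0; have e11 := e 1 1.
rewrite !entM g00 g01 g10 g11 /= in e00 e01 e10 e11.
rewrite mulr0 addr0 in e00.
rewrite mulr0 addr0 in e10.
have y00 : ent g^-1 0 0 = a^-1 by rewrite -[LHS]mulr1 -(divrr ua) mulrA e00 mul1r.
have y10 : ent g^-1 1 0 = 0.
  by rewrite -[LHS]mulr1 -(mulrV ua) mulrA e10 mul0r.
split => //.
- by move: e01; rewrite mulr1 y00 => /eqP; rewrite addrC addr_eq0 => /eqP.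
- by move: e11; rewrite y10 mul0r add0r mulr1.
Qed.


Lemma shpA : shp (glA N) 1 1.
Proof. by rewrite /shp /ent glA_E !mxE. Qed.

Lemma shpT : shp (glT m N) (m%:R) 0.
Proof. by rewrite /shp /ent glT_E !mxE. Qed.

Definition u : {unit Z} := insubd (1%g : {unit Z}) (m%:R : Z).

Lemma val_u : val u = m%:R.
Proof. exact: (insubdK _ unit_m). Qed.

Lemma ordmE : ordm m N = #[u]%g.
Proof. by []. Qed.

Definition H : {set gT} :=
  [set g | (ent g 1 0 == 0) && (ent g 1 1 == 1) && [exists w in <[u]>%g, ent g 0 0 == val w]].

Lemma inH g : reflect (exists2 w, w \in <[u]>%g & shp g (val w) (ent g 0 1)) (g \in H).
Proof.
rewrite inE; apply: (iffP idP).
  by case/andP => /andP[/eqP h10 /eqP h11] /exists_inP[w wu /eqP h00]; exists w.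
case=> w wu [h00 _ h10 h11]; rewrite h10 h11 !eqxx /=.
by apply/exists_inP; exists w => //; rewrite h00.
Qed.

Lemma group_set_H : group_set H.
Proof.
apply/andP; split.
  apply/inH; exists 1%g; first exact: group1.
  by rewrite /shp !ent1 /=.
apply/subsetP => x /mulsgP[g h /inH[w wu sg] /inH[w' wu' sh] ->].
apply/inH; exists (w * w')%g; first exact: groupM.
have := shp_mul sg sh; rewrite val_unitM; case=> h00 h01 h10 h11.
by split.
Qed.

Canonical H_group := Group group_set_H.

Lemma quot_sub_H : quot m N \subset H.
Proof.
rewrite /quot gen_subG; apply/subsetP => x /set2P[] ->; apply/inH.
  exists 1%g; first exact: group1.
  by have [h00 h01 h10 h11] := shpA; split.
exists u; first exact: cycle_id.
by have [h00 h01 h10 h11] := shpT; split; rewrite // val_u.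
Qed.


Lemma shp_Apow n : shp ((glA N : GG) ^+ n)%g 1 n%:R.
Proof.
elim: n => [|n IH]; first by rewrite expg0 /shp !ent1.
by rewrite expgS; have := shp_mul shpA IH; rewrite !mul1r -mulrSr.
Qed.

Lemma shp_Tpow n : shp ((glT m N : GG) ^+ n)%g (m%:R ^+ n) 0.
Proof.
elim: n => [|n IH]; first by rewrite expg0 /shp !ent1.
by rewrite expgS; have := shp_mul shpT IH; rewrite -exprS mulr0 addr0.
Qed.

Definition fH (g : gT) : Z * {unit Z} := (ent g 0 1, insubd (1%g : {unit Z}) (ent g 0 0)).

Lemma fH_inj : {in H &, injective fH}.
Proof.
move=> g h /inH[w wu sg] /inH[w' wu' sh] [e01 e00].
have [g00 _ _ _] := sg; have [h00 _ _ _] := sh.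
rewrite g00 h00 !valKd in e00; subst w'.
by apply: (shp_inj sg); rewrite e01.
Qed.

Lemma card_quot : #|quot m N| = (N * #[u]%g)%N.
Proof.
have sQH := subsetP quot_sub_H.
rewrite -(card_in_imset (f := fH)); last by move=> g h /sQH gH /sQH hH; apply: fH_inj.
have -> : fH @: quot m N = setX [set: Z] <[u]>%g.
  apply/eqP; rewrite eqEsubset; apply/andP; split.
    apply/subsetP => x /imsetP[g gQ ->].
    have /inH[w wu [g00 _ _ _]] := sQH g gQ.
    by rewrite /fH g00 valKd inE /= inE wu.
  apply/subsetP => [[z w]]; rewrite inE /= => /andP[_ /cycleP[k ->]].
  apply/imsetP; exists ((glA N : GG) ^+ z * (glT m N : GG) ^+ k)%g.
    by apply: groupM; apply: groupX; apply: mem_gen; [exact: set21 | exact: set22].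
  have [g00 g01 _ _] := shp_mul (shp_Apow z) (shp_Tpow k).
  rewrite /fH g00 g01 natr_Zp mulr0 add0r mul1r; congr (_, _).
  by apply: val_inj; rewrite insubdK -?val_u -?val_unitX //; exact: (valP (u ^+ k)%g).
by rewrite cardsX cardsT card_ord Zp_cast.
Qed.

End Quot.

End QuotM.
Import QuotM.

Module DiamM.
Set Implicit Arguments. Unset Strict Implicit. Unset Printing Implicit Defensive.
Import GRing.Theory FinRing.Theory.
Local Open Scope ring_scope.

Section Diam.
Variables (m N : nat).
Hypothesis HN : (1 < N)%N.
Hypothesis Hc : coprime N m.
Hypothesis Hm : (1 < m)%N.

Local Notation Z := 'Z_N.
Local Notation gT := {'GL_2['Z_N]}.
Local Notation GG := (matrix_GLtype__canonical__fingroup_FinGroup 2 'Z_N).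
Local Notation S := (genAT m N).
Local Notation u := (u m N).
Local Notation ent := (@ent N).
Local Notation shp := (@shp N).

Lemma A_sym : glA N \in symgen S.
Proof. by apply/setUP; left; exact: set21. Qed.
Lemma T_sym : glT m N \in symgen S.
Proof. by apply/setUP; left; exact: set22. Qed.

Lemma val_u_unit : val u \is a GRing.unit.
Proof. exact: (valP u). Qed.

Lemma shp_sym s : s \in symgen S -> exists c d, shp s c d /\
   [\/ c = 1, c = val u | c = (val u)^-1].
Proof.
rewrite /symgen => /setUP[|/imsetP[t ht ->]]; first case/set2P => ->.
- by exists 1, 1; split; [exact: shpA | constructor 1].
- by exists (val u), 0; split; [rewrite val_u //; exact: shpT | constructor 2].
case/set2P: ht => ->.
- exists 1^-1, (- (1^-1 * 1)); split; first by apply: shp_inv; [exact: unitr1 | exact: shpA].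
  by rewrite invr1; constructor 1.
- exists (val u)^-1, (- ((val u)^-1 * 0)); split; last by constructor 3.
  by apply: shp_inv; [exact: val_u_unit | rewrite val_u //; exact: shpT].
Qed.

Lemma cball_inv i g : g \in cball S i ->
  [/\ ent g 1 0 = 0, ent g 1 1 = 1 &
     exists a b, (a + b <= i)%N /\ ent g 0 0 = val u ^+ a * (val u)^-1 ^+ b].
Proof.
elim: i g => [|i IH] g.
  rewrite cball0 => /set1P ->; rewrite !ent1 /=; split => //.
  by exists 0%N, 0%N; rewrite !expr0 mulr1.
rewrite cballS => /setUP[/IH [h10 h11 [a [b [hab h00]]]]|].
  by split => //; exists a, b; split => //; apply: leqW.
case/mulsgP => b s /IH [h10 h11 [a [b' [hab h00]]]] /shp_sym [c [d [[s00 s01 s10 s11] hc]]] ->.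
rewrite !entM h10 h11 s00 s01 s10 s11 !mul0r !add0r !mulr0 !mul1r addr0.
split => //.
case: hc => ->.
- by exists a, b'; split; [apply: leqW | rewrite h00 mulr1].
- exists a.+1, b'; split; first by rewrite addSn.
  by rewrite h00 exprS mulrAC; congr (_ * _); rewrite mulrC.
- exists a, b'.+1; split; first by rewrite addnS.
  by rewrite h00 exprSr mulrA.
Qed.

Lemma card_gT : (N * #[u]%g <= #|GG|)%N.
Proof. by rewrite -card_quot //; exact: max_card. Qed.

Lemma ordm_gt0 : (0 < #[u]%g)%N.
Proof. exact: order_gt0. Qed.

Lemma diam_lower : (ordm m N <= 4 * quot_diam m N)%N.
Proof.
rewrite ordmE.
set o := #[u]%g.
have hT : (o <= #|GG|)%N.
  apply: leq_trans card_gT; rewrite leq_pmull //; exact: ltnW.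
have h1 : (1 <= quot_diam m N)%N.
  apply: leq_trans (diam_ge (mem_gen (set21 (glA N) (glT m N)))).
  apply: wordlen_ge; last by apply: leq_trans hT; exact: ordm_gt0.
  case=> // _; rewrite cball0; apply/negP => /set1P hA.
  have := shpA N; rewrite hA /shp !ent1 /= => [[_ /esym/eqP]].
  by rewrite oner_eq0.
have h2 : ((o %/ 2) <= quot_diam m N)%N.
  have hj : (o %/ 2 <= o)%N by apply: leq_div.
  apply: leq_trans (diam_ge (groupX (o %/ 2)%N (mem_gen (set22 (glA N) (glT m N))))).
  apply: wordlen_ge; last exact: leq_trans hj hT.
  move=> i hi; apply/negP => /cball_inv [_ _ [a [b [hab h00]]]].
  have [t00 _ _ _] := shp_Tpow HN Hc (o %/ 2)%N.
  rewrite t00 -val_u in h00.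
  have e : val u ^+ (o %/ 2 + b)%N = val u ^+ a.
    rewrite exprD h00 -mulrA -exprMn_comm; last by rewrite /GRing.comm mulrC.
    by rewrite mulVr ?val_u_unit // expr1n mulr1.
  rewrite -!val_unitX in e; move/val_inj/eqP: e.
  rewrite eq_expg_mod_order !modn_small -/o.
  - by move/eqP => e; move: hab hi; rewrite -e; lia.
  - by lia.
  - by lia.
  - by [].
  - by [].
move: h1 h2; lia.
Qed.


Lemma build D : forall r w, w \in <[u]>%g -> (r < m ^ D)%N ->
  exists2 g, g \in cball S (#[u]%g + m * D)%N & shp g (val w) r%:R.
Proof.
elim: D => [|D IH] r w wu hr.
  have r0 : r = 0%N by move: hr; rewrite expn0; lia.
  subst r.
  case/cycleP: wu => k ->; rewrite -expg_mod_order.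
  set k' := (k %% #[u]%g)%N.
  have hk' : (k' < #[u]%g)%N by rewrite ltn_pmod // ordm_gt0.
  exists ((glT m N : GG) ^+ k' * 1)%g.
    have h1 : (1%g : GG) \in cball S 0 by rewrite cball0 set11.
    have := cball_lpow k' T_sym h1.
    by apply: (subsetP (cball_monoW _ _)); rewrite muln0 addn0 add0n ltnW.
  rewrite mulg1 val_unitX val_u //.
  exact: shp_Tpow.
pose q := (r %/ m)%N; pose d := (r %% m)%N.
have hq : (q < m ^ D)%N by rewrite ltn_divLR ?(ltnW Hm) // -expnSr.
have hd : (d < m)%N by rewrite ltn_pmod // ltnW.
have wu' : (u^-1 * w)%g \in <[u]>%g by rewrite groupM // groupV cycle_id.
have [g' hg' sg'] := IH q _ wu' hq.
exists ((glA N : GG) ^+ d * ((glT m N : GG) * g'))%g.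
  have := cball_lpow d A_sym (cball_lmul T_sym hg').
  apply: (subsetP (cball_monoW _ _)); rewrite mulnS; lia.
have := shp_mul (shp_Apow N d) (shp_mul (shpT HN Hc) sg').
rewrite val_unitM val_unitV val_u // mulVKr ?unit_m // !mul1r addr0.
by rewrite (divn_eq r m) natrD natrM mulrC.
Qed.


Lemma diam_upper : (quot_diam m N <= ordm m N + m * (trunc_log 2 N).+1)%N.
Proof.
rewrite ordmE /quot_diam; apply: diam_le => g hg.
have /inH[w wu sg] := subsetP (quot_sub_H HN Hc) g hg.
set r := ent g 0 1 in sg.
have hr : ((r : nat) < m ^ (trunc_log 2 N).+1)%N.
  have h1 : (r < N)%N by have := ltn_ord r; rewrite {2}(Zp_cast HN).
  apply: (leq_trans h1); apply: ltnW; apply: (leq_trans (trunc_log_ltn N (isT : (1 < 2)%N))).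
  by rewrite leq_exp2r.
have [g' hg' sg'] := build wu hr.
rewrite natr_Zp in sg'.
by rewrite (shp_inj sg sg'); exact: wordlen_le.
Qed.

End Diam.

Lemma quot_facts (m N : nat) : (1 < N)%N -> coprime N m -> (1 < m)%N ->
  [/\ quot_card m N = (N * ordm m N)%N, (0 < ordm m N)%N,
      (ordm m N <= 4 * quot_diam m N)%N,
      (quot_diam m N <= ordm m N + m * (trunc_log 2 N).+1)%N
    & (2 ^ trunc_log 2 N <= N)%N].
Proof.
move=> HN Hc Hm; split.
- by rewrite /quot_card card_quot // ordmE.
- by rewrite ordmE ordm_gt0.
- exact: diam_lower.
- exact: diam_upper.
- by apply: trunc_logP => //; lia.
Qed.

End DiamM.
Import DiamM.

From mathcomp Require Import all_boot.
From Stdlib Require Import Reals Lra Lia Psatz.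

Lemma INR_addn (a b : nat) : INR (a + b)%nat = (INR a + INR b)%R.
Proof. by rewrite -plusE plus_INR. Qed.
Lemma INR_muln (a b : nat) : INR (a * b)%nat = (INR a * INR b)%R.
Proof. by rewrite -multE mult_INR. Qed.
Lemma INR_leq {a b : nat} : (a <= b)%nat -> (INR a <= INR b)%R.
Proof. by move/leP; apply: le_INR. Qed.

Lemma INR_expn (a n : nat) : INR (expn a n) = (INR a ^ n)%R.
Proof. elim: n => [|n IH]; first by rewrite expn0.
by rewrite expnS INR_muln IH. Qed.

Theorem proposition3p4 (m : nat) (alpha : R) (N : nat -> nat) :
  (2 <= m)%nat -> (0 < alpha < 1)%R -> arith_seq m N ->
  (D_alpha m N alpha <->
   exists c : R, (0 < c)%R /\
     forall k, (INR (ordm m (N k)) >= c * Rpower (INR (N k)) (alpha / (1 - alpha)))%R).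
Proof.
move=> hm ha hN.
have F : forall k, _ := fun k => quot_facts (proj1 (hN k)) (proj1 (proj2 (hN k))) hm.
have hn2 : forall k, (2 <= INR (N k))%R.
  by move=> k; have [h2 _] := hN k; have := INR_leq h2; rewrite /=; lra.
have ho1 : forall k, (1 <= INR (ordm m (N k)))%R.
  by move=> k; have [_ h _ _ _] := F k; have := INR_leq h.
split.
- case=> C [hC hD].
  have hmR : (0 < INR m)%R by have := INR_leq hm; rewrite /=; lra.
  have [c [hc hc']] := bwd_real alpha C (INR m) ha hC hmR.
  exists c; split => // k; apply: Rle_ge.
  have [hq _ hlo hup hlog] := F k.
  apply: (hc' _ _ (INR (quot_diam m (N k))) (INR (trunc_log 2 (N k)))).
  + exact: ho1.
  + exact: hn2.
  + exact: pos_INR.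
  + rewrite -ln_pow; last by lra.
    apply: ln_le_mono; first by apply: pow_lt; lra.
    have := INR_leq hlog; rewrite INR_expn; replace (INR 2) with 2%R by (simpl; lra); by [].
  + by have := hD k; rewrite hq INR_muln => /Rge_le.
  + by have := INR_leq hup; rewrite INR_addn INR_muln S_INR.
- case=> c [hc hc'].
  exists (exp ((1 - alpha) * ln c - ln 4)); split; first exact: exp_pos.
  move=> k; apply: Rle_ge.
  have [hq _ hlo hup hlog] := F k.
  apply: (@fwd_real alpha c _ _ _ _ ha hc (ho1 k) (hn2 k)).
  + by rewrite hq INR_muln.
  + by have := INR_leq hlo; rewrite INR_muln; replace (INR 4) with 4%R by (simpl; lra).
  + exact: Rge_le.
Qed.
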